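(* Let $X$ be a compact metric space and $F\colon X\to 2^X$ a set-valued mapping with the specification property. Then the set-valued map $\gamma\colon\varprojlim F\to 2^{\varprojlim F}$ has the specification property.
   Context: $d$ is the metric on $X$; $2^Y$ is the space of nonempty closed subsets of $Y$; a set-valued mapping is an upper semicontinuous $F\colon X\to 2^X$. The inverse limit is $\varprojlim F=\{(x_0,x_1,\dots)\in X^{\mathbb{N}}: x_i\in F(x_{i+1})\text{ for all } i\}$ with the product topology (and any compatible metric). $\gamma$ is defined by $\gamma((x_0,x_1,\dots))=\{(x_{-1},x_0,x_1,\dots): x_{-1}\in F(x_0)\}$. For a set-valued map $G$ on a compact metric space $(Y,\rho)$, an orbit of $y$ is a sequence $(y_j)_{j=0}^\infty$ with $y_0=y$, $y_{j+1}\in G(y_j)$, and $G$ has the specification property if for every $\epsilon>0$ there is $M\in\mathbb{N}$ such that for any $n$, any $y^1,\dots,y^n\in Y$, any integers $0\le a_1\le b_1<a_2\le\dots<a_n\le b_n$ with $a_{i+1}-b_i>M$, any orbits $(y^i_j)_{j=0}^\infty$ of the $y^i$, and any $P>M+b_n-a_1$, there is $z\in Y$ with an orbit $(z_j)_{j=0}^\infty$ such that $\rho(z_j,y^i_j)<\epsilon$ for $1\le i\le n$, $a_i\le j\le b_i$, and $z_P=z$. *)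

(* Defs.v *)
From Stdlib Require Import Reals List.
Open Scope R_scope.

Definition is_metric_on {Y : Type} (A : Y -> Prop) (d : Y -> Y -> R) : Prop :=
  (forall x y, A x -> A y -> 0 <= d x y) /\
  (forall x y, A x -> A y -> (d x y = 0 <-> x = y)) /\
  (forall x y, A x -> A y -> d x y = d y x) /\
  (forall x y z, A x -> A y -> A z -> d x z <= d x y + d y z).

Definition is_metric {Y : Type} (d : Y -> Y -> R) : Prop :=
  is_metric_on (fun _ => True) d.

Definition open_in {Y : Type} (A : Y -> Prop) (d : Y -> Y -> R) (U : Y -> Prop) : Prop :=
  forall x, A x -> U x ->
    exists eps, eps > 0 /\ forall y, A y -> d x y < eps -> U y.

Definition is_open {Y : Type} (d : Y -> Y -> R) (U : Y -> Prop) : Prop :=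
  open_in (fun _ => True) d U.

Definition is_closed {Y : Type} (d : Y -> Y -> R) (C : Y -> Prop) : Prop :=
  is_open d (fun y => ~ C y).

Definition compact_metric {Y : Type} (d : Y -> Y -> R) : Prop :=
  forall (I : Type) (U : I -> Y -> Prop),
    (forall i, is_open d (U i)) ->
    (forall y, exists i, U i y) ->
    exists l : list I, forall y, exists i, In i l /\ U i y.

(* Set-valued maps are encoded as relations: F x y  means  y \in F(x). *)
Definition set_valued_usc {X : Type} (d : X -> X -> R) (F : X -> X -> Prop) : Prop :=
  (forall x, exists y, F x y) /\
  (forall x, is_closed d (F x)) /\
  (forall x (U : X -> Prop), is_open d U -> (forall y, F x y -> U y) ->
     exists V : X -> Prop, is_open d V /\ V x /\
       forall x' y, V x' -> F x' y -> U y).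

Definition invlim {X : Type} (F : X -> X -> Prop) (x : nat -> X) : Prop :=
  forall i, F (x (S i)) (x i).

(* gamma(x) = {(x_{-1}, x_0, x_1, ...) : x_{-1} \in F(x_0)}, shifted indices. *)
Definition gamma {X : Type} (F : X -> X -> Prop) (x y : nat -> X) : Prop :=
  F (x 0%nat) (y 0%nat) /\ forall k, y (S k) = x k.

Definition prod_open_in {X : Type} (A : (nat -> X) -> Prop) (d : X -> X -> R)
  (U : (nat -> X) -> Prop) : Prop :=
  forall x, A x -> U x ->
    exists (N : nat) (eps : R), eps > 0 /\
      forall y, A y -> (forall i, (i <= N)%nat -> d (x i) (y i) < eps) -> U y.

Definition compatible_invlim_metric {X : Type} (d : X -> X -> R)
  (F : X -> X -> Prop) (rho : (nat -> X) -> (nat -> X) -> R) : Prop :=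
  is_metric_on (invlim F) rho /\
  forall U : (nat -> X) -> Prop,
    open_in (invlim F) rho U <-> prod_open_in (invlim F) d U.

Definition orbit {Y : Type} (A : Y -> Prop) (G : Y -> Y -> Prop) (z : nat -> Y) : Prop :=
  forall j, A (z j) /\ G (z j) (z (S j)).

(* Specification property of G on the metric space (A, rho).
   Points y^1..y^n are ys 1 .. ys n, orbits are orb 1 .. orb n. *)
Definition spec_prop {Y : Type} (A : Y -> Prop) (rho : Y -> Y -> R)
  (G : Y -> Y -> Prop) : Prop :=
  forall eps, eps > 0 ->
  exists M : nat,
  forall (n : nat) (ys : nat -> Y) (a b : nat -> nat) (orb : nat -> nat -> Y) (P : nat),
    (1 <= n)%nat ->
    (forall i, (1 <= i <= n)%nat -> A (ys i)) ->
    (forall i, (1 <= i <= n)%nat -> (a i <= b i)%nat) ->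
    (forall i, (1 <= i < n)%nat -> (b i + M < a (S i))%nat) ->
    (forall i, (1 <= i <= n)%nat -> orbit A G (orb i) /\ orb i 0%nat = ys i) ->
    (M + b n < P + a 1%nat)%nat ->
    exists (z : Y) (zs : nat -> Y),
      A z /\ orbit A G zs /\ zs 0%nat = z /\
      (forall i j, (1 <= i <= n)%nat -> (a i <= j <= b i)%nat ->
         rho (zs j) (orb i j) < eps) /\
      zs P = z.

(* Main.v *)
Require Import Defs.
From Stdlib Require Import Reals List Lra Lia Classical ClassicalEpsilon FunctionalExtensionality.
Open Scope R_scope.

Definition conv {X : Type} (d : X -> X -> R) (u : nat -> X) (p : X) : Prop :=
  forall r, r > 0 -> exists K, forall n, (K <= n)%nat -> d (u n) p < r.

Lemma msym {X} (d : X -> X -> R) : is_metric d -> forall x y, d x y = d y x.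
Proof. intros [_ [_ [H _]]] x y; apply H; auto. Qed.
Lemma mtri {X} (d : X -> X -> R) : is_metric d -> forall x y z, d x z <= d x y + d y z.
Proof. intros [_ [_ [_ H]]] x y z; apply H; auto. Qed.
Lemma mzero {X} (d : X -> X -> R) : is_metric d -> forall x, d x x = 0.
Proof. intros [_ [H _]] x; apply (proj2 (H x x I I)); auto. Qed.

Lemma seq_cluster {X} (d : X -> X -> R) : is_metric d -> compact_metric d ->
  forall s : nat -> X, exists c, forall r, r > 0 -> forall m, exists n, (m <= n)%nat /\ d (s n) c < r.
Proof.
  intros Hm Hc s. apply NNPP; intro Hn.
  pose (U := fun (t : X * R * nat) (y : X) =>
     let '(c, r, m) := t in r > 0 /\ (forall n, (m <= n)%nat -> r <= d (s n) c) /\ d c y < r).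
  destruct (Hc _ U) as [l Hl].
  - intros [[c r] m] x _ [hr [hn hx]].
    exists (r - d c x); split; [lra|]. intros y _ hy. split; [lra|]. split; [exact hn|].
    pose proof (mtri d Hm c x y). lra.
  - intro y. apply NNPP; intro hy. apply Hn. exists y. intros r hr m.
    apply NNPP; intro h. apply hy. exists (y, r, m). simpl. split; [lra|]. split.
    + intros n hn. apply Rnot_lt_le. intro hlt. apply h. exists n. split; auto.
    + rewrite mzero; auto.
  - pose (mx := fold_right (fun (t : X*R*nat) acc => Nat.max (snd t) acc) 0%nat l).
    assert (Hmx : forall t, In t l -> (snd t <= mx)%nat).
    { unfold mx; clear. induction l as [|t l IH]; simpl; [tauto|].
      intros t' [<-|h]; [lia|]. specialize (IH t' h). lia. }
    destruct (Hl (s mx)) as [[[c r] m] [hin [hr [hn hx]]]].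
    specialize (Hmx _ hin); simpl in Hmx. specialize (hn mx Hmx).
    rewrite (msym d Hm) in hx. lra.
Qed.

Lemma seq_compact {X} (d : X -> X -> R) : is_metric d -> compact_metric d ->
  forall s : nat -> X, exists (phi : nat -> nat) c, (forall n, (phi n < phi (S n))%nat) /\ conv d (fun k => s (phi k)) c.
Proof.
  intros Hm Hc s. destruct (seq_cluster d Hm Hc s) as [c Hcl].
  assert (pos : forall k, / INR (S k) > 0).
  { intro k. apply Rinv_0_lt_compat. apply lt_0_INR. lia. }
  pose (pick := fun k m => proj1_sig (constructive_indefinite_description _ (Hcl _ (pos k) m))).
  assert (Hpick : forall k m, (m <= pick k m)%nat /\ d (s (pick k m)) c < / INR (S k)).
  { intros k m. unfold pick. destruct constructive_indefinite_description; simpl; auto. }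
  pose (phi := fix phi k := match k with O => pick O O | S k' => pick k (S (phi k')) end).
  exists phi, c. split.
  - intro n. simpl. destruct (Hpick (S n) (S (phi n))). lia.
  - intros r hr. destruct (archimed_cor1 r hr) as [N [hN hN0]]. exists N. intros n hn.
    assert (h : d (s (phi n)) c < / INR (S n)).
    { destruct n; simpl; apply Hpick. }
    eapply Rlt_le_trans; [exact h|]. left. eapply Rle_lt_trans; [|exact hN].
    apply Rinv_le_contravar. apply lt_0_INR; lia. apply le_INR; lia.
Qed.

Lemma diag {X} (d : X -> X -> R) : is_metric d -> compact_metric d ->
  forall x : nat -> nat -> X, exists (psi : nat -> nat) (c : nat -> X),
    (forall n, (n <= psi n)%nat) /\ forall i, conv d (fun n => x (psi n) i) (c i).
Proof.
  intros Hm Hc x.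
  assert (SC : forall s : nat -> X, {p : (nat -> nat) * X |
     (forall n, (fst p n < fst p (S n))%nat) /\ conv d (fun k => s (fst p k)) (snd p)}).
  { intro s. apply constructive_indefinite_description.
    destruct (seq_compact d Hm Hc s) as [phi [c [h1 h2]]]. exists (phi, c). auto. }
  pose (g := fix g k := match k with O => fun n : nat => n
     | S k' => fun n => g k' (fst (proj1_sig (SC (fun m => x (g k' m) k'))) n) end).
  assert (strict_ge : forall phi : nat -> nat, (forall n, (phi n < phi (S n))%nat) -> forall n, (n <= phi n)%nat).
  { intros phi h n; induction n; [lia|]. specialize (h n). lia. }
  assert (Hcomp : forall j k, exists h : nat -> nat, (forall m, (m <= h m)%nat) /\
            forall m, g (j + k)%nat m = g k (h m)).
  { intros j k; induction j as [|j [h [h1 h2]]].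
    - exists (fun m => m); split; auto.
    - simpl. destruct (SC (fun m => x (g (j + k)%nat m) (j + k)%nat)) as [[phi c] [p1 p2]] eqn:E.
      simpl. exists (fun m => h (phi m)). split.
      + intro m. specialize (h1 (phi m)). pose proof (strict_ge phi p1 m). lia.
      + intro m. apply h2. }
  exists (fun n => g (S n) n), (fun k => snd (proj1_sig (SC (fun m => x (g k m) k)))).
  split.
  - intro n. destruct (Hcomp (S n) 0%nat) as [h [h1 h2]]. rewrite Nat.add_0_r in h2.
    rewrite h2. simpl. apply h1.
  - intros i r hr.
    destruct (SC (fun m => x (g i m) i)) as [[phi c] [p1 p2]] eqn:E. simpl.
    destruct (p2 r hr) as [K HK]. exists (Nat.max K i). intros n hn.
    destruct (Hcomp (n - i)%nat (S i)) as [h [h1 h2]].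
    change (d (x (g (S n) n) i) c < r). replace (S n) with (n - i + S i)%nat by lia. rewrite h2. simpl. rewrite E. simpl.
    apply HK. specialize (h1 n). lia.
Qed.

Lemma closed_graph {X} (d : X -> X -> R) (F : X -> X -> Prop) : is_metric d -> set_valued_usc d F ->
  forall u v p q, conv d u p -> conv d v q -> (forall n, F (u n) (v n)) -> F p q.
Proof.
  intros Hm [_ [Hcl Husc]] u v p q hu hv hF. apply NNPP; intro hn.
  destruct (Hcl p q I hn) as [eps [heps Heps]].
  pose (U := fun y => eps / 2 < d q y).
  destruct (Husc p U) as [V [HVo [HVp HV]]].
  - intros y _ hy. exists (d q y - eps / 2). split; [unfold U in hy; lra|].
    intros z _ hz. unfold U in *. pose proof (mtri d Hm q z y) as Ht. rewrite (msym d Hm z y) in Ht. lra.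
  - intros y hy. unfold U. apply Rnot_le_lt. intro hle. apply (Heps y I); auto. lra.
  - destruct (HVo p I HVp) as [del [hdel Hdel]].
    destruct (hu del hdel) as [K1 H1]. destruct (hv (eps/2) ltac:(lra)) as [K2 H2].
    specialize (H1 (Nat.max K1 K2) ltac:(lia)). specialize (H2 (Nat.max K1 K2) ltac:(lia)).
    assert (V (u (Nat.max K1 K2))) by (apply Hdel; auto; rewrite msym; auto).
    specialize (HV _ _ H (hF _)). unfold U in HV. rewrite (msym d Hm) in HV. lra.
Qed.

Lemma finite_max (P : nat -> nat -> Prop) :
  (forall i, exists K, forall n, (K <= n)%nat -> P i n) ->
  forall N0, exists K, forall n, (K <= n)%nat -> forall i, (i <= N0)%nat -> P i n.
Proof.
  intros H N0. induction N0 as [|N0 [K IH]].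
  - destruct (H 0%nat) as [K HK]. exists K. intros n hn i hi. replace i with 0%nat by lia. auto.
  - destruct (H (S N0)) as [K' HK]. exists (Nat.max K K'). intros n hn i hi.
    destruct (Nat.eq_dec i (S N0)) as [->|]. apply HK; lia. apply IH; lia.
Qed.

Lemma unif {X} (d : X -> X -> R) (F : X -> X -> Prop) rho :
  is_metric d -> compact_metric d -> set_valued_usc d F -> compatible_invlim_metric d F rho ->
  forall eps, eps > 0 -> exists N e, e > 0 /\ forall x y, invlim F x -> invlim F y ->
    (forall i, (i <= N)%nat -> d (x i) (y i) < e) -> rho x y < eps.
Proof.
  intros Hm Hc Hu [[Hr0 [Hrz [Hrs Hrt]]] Hcomp] eps heps. apply NNPP; intro Hn.
  assert (pos : forall k, / INR (S k) > 0).
  { intro k. apply Rinv_0_lt_compat. apply lt_0_INR. lia. }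
  assert (H : forall N, exists xy : (nat -> X) * (nat -> X), invlim F (fst xy) /\ invlim F (snd xy) /\
     (forall i, (i <= N)%nat -> d (fst xy i) (snd xy i) < / INR (S N)) /\ rho (fst xy) (snd xy) >= eps).
  { intro N. apply NNPP; intro H'. apply Hn. exists N, (/ INR (S N)). split; [apply pos|].
    intros x y hx hy hc. apply Rnot_ge_lt. intro hge. apply H'. exists (x, y). simpl; auto. }
  pose (xy := fun N => proj1_sig (constructive_indefinite_description _ (H N))).
  assert (Hxy : forall N, invlim F (fst (xy N)) /\ invlim F (snd (xy N)) /\
     (forall i, (i <= N)%nat -> d (fst (xy N) i) (snd (xy N) i) < / INR (S N)) /\ rho (fst (xy N)) (snd (xy N)) >= eps).
  { intro N. unfold xy. destruct constructive_indefinite_description; simpl; auto. }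
  destruct (diag d Hm Hc (fun N => fst (xy N))) as [psi [c [Hpsi Hconv]]].
  assert (Hcinv : invlim F c).
  { intro i. apply (closed_graph d F Hm Hu (fun n => fst (xy (psi n)) (S i)) (fun n => fst (xy (psi n)) i)).
    apply Hconv. apply Hconv. intro n. apply (proj1 (Hxy (psi n))). }
  assert (Hop : open_in (invlim F) rho (fun y => rho c y < eps / 2)).
  { intros y hy hcy. exists (eps / 2 - rho c y). split; [lra|]. intros z hz hyz.
    pose proof (Hrt c y z Hcinv hy hz). lra. }
  assert (Hcc : rho c c < eps / 2).
  { replace (rho c c) with 0 by (symmetry; apply (Hrz c c Hcinv Hcinv); auto). lra. }
  destruct (proj1 (Hcomp _) Hop c Hcinv Hcc) as [N0 [e [he He]]].
  destruct (finite_max (fun i n => d (fst (xy (psi n)) i) (c i) < e / 2)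
     (fun i => Hconv i (e / 2) ltac:(lra)) N0) as [K HK].
  destruct (archimed_cor1 (e / 2) ltac:(lra)) as [m [hm hm0]].
  destruct (ex_intro (fun n => (K <= n /\ N0 <= n /\ m <= n)%nat) (Nat.max K (Nat.max N0 m)) ltac:(cbv beta; lia)) as [n [hn1 [hn2 hn3]]].
  specialize (Hpsi n). specialize (HK n hn1).
  destruct (Hxy (psi n)) as [hx [hy [hxy hge]]].
  assert (h1 : rho c (fst (xy (psi n))) < eps / 2).
  { apply He; auto. intros i hi. rewrite (msym d Hm). specialize (HK i hi). lra. }
  assert (hinv : / INR (S (psi n)) <= / INR m).
  { apply Rinv_le_contravar. apply lt_0_INR; lia. apply le_INR. lia. }
  assert (h2 : rho c (snd (xy (psi n))) < eps / 2).
  { apply He; auto. intros i hi. specialize (HK i hi).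
    assert (hi' : (i <= psi n)%nat) by lia.
    specialize (hxy i hi').
    pose proof (mtri d Hm (c i) (fst (xy (psi n)) i) (snd (xy (psi n)) i)).
    rewrite (msym d Hm (fst (xy (psi n)) i)) in HK. lra. }
  pose proof (Hrt _ c _ hx Hcinv hy).
  rewrite (Hrs _ c hx Hcinv) in H0. lra.
Qed.

Lemma mod_succ (P m : nat) : P <> 0%nat ->
  (S (m mod P) < P /\ (S m) mod P = S (m mod P))%nat \/ (S (m mod P) = P /\ (S m) mod P = 0)%nat.
Proof.
  intro hP. pose proof (Nat.mod_upper_bound m P hP). pose proof (Nat.div_mod_eq m P).
  destruct (Nat.eq_dec (S (m mod P)) P) as [e|ne].
  - right. split; auto. symmetry. apply (Nat.mod_unique _ _ (S (m / P)) 0). lia. nia.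
  - left. split; [lia|]. symmetry. apply (Nat.mod_unique _ _ (m / P)). lia. lia.
Qed.

Lemma mod_addP (P m : nat) : P <> 0%nat -> ((m + P) mod P = m mod P)%nat.
Proof. intro hP. replace (m + P)%nat with (m + 1 * P)%nat by lia. apply Nat.Div0.mod_add. Qed.

Lemma periodic_orbit {X} (F : X -> X -> Prop) (w : nat -> X) (P : nat) :
  P <> 0%nat -> (forall j, F (w j) (w (S j))) -> w P = w 0%nat ->
  forall m, F (w (m mod P)) (w ((S m) mod P)).
Proof.
  intros hP hw hper m. destruct (mod_succ P m hP) as [[h1 h2]|[h1 h2]].
  - rewrite h2. apply hw.
  - rewrite h2, <- hper. assert (E : w P = w (S (m mod P))) by (rewrite h1; auto). rewrite E. apply hw.
Qed.

Lemma gamma_shift {X} (F : X -> X -> Prop) (o : nat -> nat -> X) :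
  (forall j, gamma F (o j) (o (S j))) -> forall t j k, o (j + t)%nat (k + t)%nat = o j k.
Proof.
  intros H t. induction t; intros j k. rewrite !Nat.add_0_r; auto.
  replace (j + S t)%nat with (S (j + t)) by lia. replace (k + S t)%nat with (S (k + t)) by lia.
  rewrite (proj2 (H _)). auto.
Qed.

Lemma gamma_F {X} (F : X -> X -> Prop) (o : nat -> nat -> X) :
  (forall j, invlim F (o j) /\ gamma F (o j) (o (S j))) -> forall j k, F (o j k) (o (S j) k).
Proof.
  intros H j k. destruct (H (S j)) as [h _]. specialize (h k).
  rewrite (proj2 (proj2 (H j))) in h. auto.
Qed.

Lemma mono (a b : nat -> nat) n M :
  (forall i, (1 <= i <= n)%nat -> (a i <= b i)%nat) ->
  (forall i, (1 <= i < n)%nat -> (b i + M < a (S i))%nat) ->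
  forall i, (1 <= i <= n)%nat -> (a 1 <= a i /\ b i <= b n)%nat.
Proof.
  intros hab hgap i hi. split.
  - induction i as [|i IH]; [lia|]. destruct (Nat.eq_dec i 0) as [->|]; [lia|].
    specialize (IH ltac:(lia)). specialize (hab i ltac:(lia)). specialize (hgap i ltac:(lia)). lia.
  - assert (forall k, (i + k <= n)%nat -> (b i <= b (i + k))%nat).
    { induction k as [|k IH]; intros h; [rewrite Nat.add_0_r; lia|].
      specialize (IH ltac:(lia)). specialize (hgap (i + k)%nat ltac:(lia)).
      specialize (hab (S (i + k)) ltac:(lia)). replace (i + S k)%nat with (S (i + k)) by lia. lia. }
    specialize (H (n - i)%nat ltac:(lia)). replace (i + (n - i))%nat with n in H by lia. exact H.
Qed.

Theorem corollary10 (X : Type) (d : X -> X -> R) (F : X -> X -> Prop)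
  (rho : (nat -> X) -> (nat -> X) -> R) :
  is_metric d -> compact_metric d -> set_valued_usc d F ->
  spec_prop (fun _ => True) d F ->
  compatible_invlim_metric d F rho ->
  spec_prop (invlim F) rho (gamma F).
Proof.
  intros Hm Hc Hu Hspec Hcomp eps heps.
  destruct (unif d F rho Hm Hc Hu Hcomp eps heps) as [N [e [he He]]].
  destruct (Hspec e he) as [M' HM].
  exists (M' + N)%nat.
  intros n ys a b orb P hn hys hab hgap horb hP.
  pose proof (mono a b n (M' + N) hab hgap) as Hmono.
  pose (v := fun i m => orb i (m + a 1%nat)%nat N).
  destruct (HM n (fun i => v i 0%nat) (fun i => a i - a 1%nat)%nat (fun i => b i + N - a 1%nat)%nat v P)
    as [z' [w [_ [hw [hw0 [hclose hwP]]]]]].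
  - exact hn.
  - intros; exact I.
  - intros i hi. specialize (hab i hi). lia.
  - intros i hi. specialize (hgap i hi). specialize (hab i ltac:(lia)).
    specialize (Hmono i ltac:(lia)). lia.
  - intros i hi. split; [|reflexivity]. intro j. split; [exact I|]. unfold v.
    replace (S j + a 1%nat)%nat with (S (j + a 1%nat)) by lia.
    apply (gamma_F F (orb i)). apply (proj1 (horb i hi)).
  - specialize (Hmono n ltac:(lia)). specialize (hab n ltac:(lia)). lia.
  - assert (hP0 : P <> 0%nat).
    { specialize (Hmono n ltac:(lia)). specialize (hab n ltac:(lia)). lia. }
    assert (hPb : (b n + N - a 1%nat < P)%nat).
    { specialize (Hmono n ltac:(lia)). specialize (hab n ltac:(lia)). lia. }
    pose (W := fun m => w (m mod P)).
    assert (HW : forall m, F (W m) (W (S m))).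
    { intro m. apply periodic_orbit; auto. intro j. apply (proj2 (hw j)). congruence. }
    assert (HWP : forall m, W (m + P)%nat = W m).
    { intro m. unfold W. rewrite mod_addP; auto. }
    assert (hk : forall k, (k + a 1%nat <= (k + a 1%nat) * P)%nat) by (intro k; nia).
    pose (idx := fun j k => (j + N + (k + a 1%nat) * P - a 1%nat - k)%nat).
    assert (hidx1 : forall j k, (idx j k + P = S (idx j (S k)))%nat).
    { intros j k. unfold idx. pose proof (hk k). pose proof (hk (S k)). lia. }
    assert (hidx2 : forall j, (idx (S j) 0 = S (idx j 0))%nat).
    { intros j. unfold idx. pose proof (hk 0%nat). lia. }
    assert (hidx3 : forall j k, (idx (S j) (S k) = idx j k + P)%nat).
    { intros j k. unfold idx. pose proof (hk k). pose proof (hk (S k)). lia. }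
    assert (hidx4 : forall k, (idx P k = idx 0 k + P)%nat).
    { intros k. unfold idx. pose proof (hk k). lia. }
    pose (zs := fun j k => W (idx j k)).
    assert (Hinv : forall j, invlim F (zs j)).
    { intros j k. unfold zs. rewrite <- (HWP (idx j k)), hidx1. apply HW. }
    exists (zs 0%nat), zs. split; [apply Hinv|]. split; [|split; [reflexivity|split]].
    + intro j. split; [apply Hinv|]. split.
      * unfold zs. rewrite hidx2. apply HW.
      * intro k. unfold zs. rewrite hidx3. apply HWP.
    + intros i j hi hj. apply He; [apply Hinv| apply (proj1 (proj1 (horb i hi) j))|].
      intros k hk'.
      specialize (Hmono i hi). specialize (hab i hi).
      assert (hjb : (j <= b n)%nat) by lia.
      set (m := (j + N - k - a 1%nat)%nat).
      assert (E1 : zs j k = w m).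
      { unfold zs, W. replace (idx j k) with (m + (k + a 1%nat) * P)%nat.
        rewrite Nat.Div0.mod_add. rewrite Nat.mod_small; auto. unfold m; lia.
        unfold idx, m. pose proof (hk k). lia. }
      assert (E2 : orb i j k = v i m).
      { unfold v. replace (m + a 1%nat)%nat with (j + (N - k))%nat by (unfold m; lia).
        replace N with (k + (N - k))%nat at 2 by lia.
        symmetry. apply (gamma_shift F (orb i)). intro j'. apply (proj2 (proj1 (horb i hi) j')). }
      rewrite E1, E2. apply hclose; auto. unfold m. lia.
    + unfold zs. apply functional_extensionality. intro k. rewrite hidx4. apply HWP.
Qed.
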